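(* Let $(\Omega, \mathcal R, \mathcal K)$ be a kinetic system that satisfies the detailed balance property. If $\mathcal M \neq \{0\}$, then there exists an $s \in \Omega$ such that the reduced system $(V, \mathcal R_V, \mathcal K[n_s])$, with $V := \Omega \setminus \{s\}$, satisfies the detailed balance condition for any value of $n_s > 0$.
   Context: A kinetic system $(\Omega,\mathcal R,\mathcal K)$ is a bidirectional chemical network with substances $\Omega=\{1,\dots,N\}$, reactions $\mathcal R\subset\mathbb Z^N\setminus\{0\}$ (with $R\in\mathcal R\Rightarrow -R\in\mathcal R$) and mass-action rates $K_R>0$; $I(R)=\{i:R(i)<0\}$, $F(R)=\{i:R(i)>0\}$. It satisfies detailed balance if there is $\overline N\in\mathbb R_+^N$ with $K_R\prod_{i\in I(R)}\overline N_i^{-R(i)}=K_{-R}\prod_{i\in F(R)}\overline N_i^{R(i)}$ for all reactions $R$. $\mathcal M=(\operatorname{span}\mathcal R)^\perp$ is the space of conservation laws. For $U=\{s\}$ and $V=\Omega\setminus\{s\}$, $\pi_V$ is the projection onto coordinates in $V$, the reduced reactions are $\mathcal R_V=\{\pi_V\overline R\neq0:\overline R\in\mathcal R\}$, and the reduced rates are $\mathcal K[n_s](R)=\sum_{\overline R\in\mathcal R:\ \pi_V\overline R=R}K_{\overline R}\, n_s^{-\overline R(s)\mathbf 1[\overline R(s)<0]}$ (i.e. $K_{\overline R}$ multiplied by $n_s^{-\overline R(s)}$ when $s\in I(\overline R)$). *)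

(* Defs.v *)
From HB Require Import structures.
From mathcomp Require Import all_boot all_order all_algebra.
From mathcomp Require Import reals.
Set Implicit Arguments. Unset Strict Implicit. Unset Printing Implicit Defensive.
Import Order.TTheory GRing.Theory Num.Theory.
Local Open Scope ring_scope.

Definition reaction (T : finType) := {ffun T -> int}.

Section Kinetic.
Variables (R : realType) (T : finType).

Definition kinetic_system (Rs : seq (reaction T)) (K : reaction T -> R) : Prop :=
  [/\ uniq Rs,
      forall r, r \in Rs -> r != 0,
      forall r, r \in Rs -> - r \in Rs
    & forall r, r \in Rs -> 0 < K r].

Definition detailed_balance (Rs : seq (reaction T)) (K : reaction T -> R) : Prop :=
  exists Nbar : T -> R, (forall i, 0 < Nbar i) /\
    forall r, r \in Rs ->
      K r * \prod_(i | r i < 0) Nbar i ^+ `|r i|%N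
      = K (- r) * \prod_(i | 0 < r i) Nbar i ^+ `|r i|%N.

Definition in_span (Rs : seq (reaction T)) (v : T -> R) : Prop :=
  exists c : reaction T -> R,
    forall i, v i = \sum_(r <- Rs) c r * (r i)%:~R.

Definition conservation_law (Rs : seq (reaction T)) (m : T -> R) : Prop :=
  forall v, in_span Rs v -> \sum_i m i * v i = 0.

End Kinetic.

Section Reduced.
Variables (R : realType) (T : finType) (s : T).

Definition Vsub := {x : T | x != s}.

Definition projV (r : reaction T) : reaction Vsub := [ffun v : Vsub => r (val v)].

Definition reduced_reactions (Rs : seq (reaction T)) : seq (reaction Vsub) :=
  undup [seq projV r | r <- Rs & projV r != 0].

Definition reduced_rates (Rs : seq (reaction T)) (K : reaction T -> R) (ns : R)
    (r : reaction Vsub) : R :=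
  \sum_(rb <- Rs | projV rb == r)
     K rb * (if rb s < 0 then ns ^+ `|rb s|%N else 1).

End Reduced.
Arguments Vsub : clear implicits.
Arguments projV {T} s r.
Arguments reduced_reactions {T} s Rs.
Arguments reduced_rates {R T} s Rs K ns r.

(* Main.v *)
Require Import Defs.
From HB Require Import structures.
From mathcomp Require Import all_boot all_order all_algebra.
From mathcomp Require Import reals sequences exp.
Import Order.TTheory GRing.Theory Num.Theory.
Local Open Scope ring_scope.

Lemma prod_Vsub (R : realType) (T : finType) (s : T) (G : T -> R) :
  \prod_(v : Vsub T s) G (val v) = \prod_(i | i != s) G i.
Proof.
rewrite (reindex_omap (val : Vsub T s -> T) insub); last first.
  by move=> i Pi; rewrite insubT.
by apply: eq_bigl => -[i iA] /=; rewrite insubT iA /= eqxx.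
Qed.

Lemma split_sum (R : realType) (T : finType) (m : T -> R) (r : reaction T) :
  \sum_i m i * (r i)%:~R =
  \sum_(i | 0 < r i) m i * (`|r i|%N)%:R - \sum_(i | r i < 0) m i * (`|r i|%N)%:R.
Proof.
rewrite [X in _ = X - _]big_mkcond [X in _ = _ - X]big_mkcond /= -sumrB.
apply: eq_bigr => i _.
case: (ltrgt0P (r i)) => h /=.
- by rewrite subr0 pmulrn abszE gtr0_norm.
- rewrite sub0r -mulrN pmulrn abszE ltr0_norm //. by rewrite intrN opprK.
- by rewrite h subr0 mulr0.
Qed.

From mathcomp Require Import ring.

Lemma prodE (R : realType) (T : finType) (P : pred T) (m : T -> R) (n : T -> nat) lam :
  \prod_(i | P i) expR (lam * m i) ^+ n i = expR (lam * \sum_(i | P i) m i * (n i)%:R).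
Proof.
rewrite mulr_sumr expR_sum; apply: eq_bigr => i _; rewrite -expRM_natl; congr expR; ring.
Qed.

Lemma reindexN (R : realType) (T : finType) (Rs : seq (reaction T)) (P : pred (reaction T))
   (G : reaction T -> R) :
  uniq Rs -> (forall r, r \in Rs -> - r \in Rs) ->
  \sum_(rb <- Rs | P rb) G rb = \sum_(rb <- Rs | P (- rb)) G (- rb).
Proof.
move=> Ru Rneg.
have pe : perm_eq Rs (map -%R Rs).
  apply: uniq_perm => //; first by rewrite (map_inj_uniq (@oppr_inj _)).
  move=> x; rewrite -{2}(opprK x) (mem_map (@oppr_inj _)).
  apply/idP/idP => /Rneg //; by rewrite opprK.
by rewrite (perm_big _ pe) big_map.
Qed.

Lemma lemA (R : realType) (T : finType) (s : T) (N : T -> R) ns (rb : reaction T) :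
  N s = ns ->
  (if rb s < 0 then ns ^+ `|rb s|%N else 1) *
    \prod_(v : Vsub T s | projV s rb v < 0) N (val v) ^+ `|projV s rb v|%N
  = \prod_(i | rb i < 0) N i ^+ `|rb i|%N.
Proof.
move=> Ns.
rewrite big_mkcond [RHS]big_mkcond (bigD1 s) //= Ns; congr (_ * _).
rewrite (eq_bigr (fun v : Vsub T s => (fun i => if rb i < 0 then N i ^+ `|rb i|%N else 1) (val v))); last first.
  by move=> v _; rewrite ffunE.
rewrite (reindex_omap (val : Vsub T s -> T) insub); last first.
  by move=> i Pi; rewrite insubT.
by apply: eq_bigl => -[i iA] /=; rewrite insubT iA /= eqxx.
Qed.

Theorem corollary5p2 (R : realType) (T : finType)
    (Rs : seq (reaction T)) (K : reaction T -> R) :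
  kinetic_system Rs K ->
  detailed_balance Rs K ->
  (exists m : T -> R, conservation_law Rs m /\ m <> (fun _ => 0)) ->
  exists s : T, forall ns : R, 0 < ns ->
    detailed_balance (reduced_reactions s Rs) (reduced_rates s Rs K ns).
Proof.
move=> [Ru Rnz Rneg Kpos] [Nb [Nbpos DB]] [m [cl mnz]].
have [s ms] : exists s, m s != 0.
  case: (boolP [exists s, m s != 0]) => [/existsP // | /existsPn H].
  exfalso; apply: mnz; apply: boolp.funext => i; apply/eqP; have := H i; by rewrite negbK.
have cr : forall r, r \in Rs -> \sum_i m i * (r i)%:~R = 0.
  move=> r rin; apply: cl.
  exists (fun r' => (r' == r)%:R) => i /=; symmetry.
  transitivity (\sum_(r' <- Rs | r' == r) ((r' i)%:~R : R)).
    rewrite [RHS]big_mkcond; apply: eq_bigr => r' _.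
    by case: eqP => _; rewrite ?mul1r ?mul0r.
  by rewrite -big_filter (filter_pred1_uniq Ru rin) big_seq1.
exists s => ns nspos.
pose lam := (ln ns - ln (Nb s)) / m s.
pose N i := Nb i * expR (lam * m i).
have Npos : forall i, 0 < N i by move=> i; rewrite mulr_gt0 // expR_gt0.
have Ns : N s = ns.
  rewrite /N /lam mulfVK // expRD expRN !lnK ?posrE //.
  by rewrite mulrCA mulfV ?mulr1 // gt_eqF.
have DBN : forall rb, rb \in Rs -> K rb * \prod_(i | rb i < 0) N i ^+ `|rb i|%N
      = K (- rb) * \prod_(i | 0 < rb i) N i ^+ `|rb i|%N.
  move=> rb rin.
  rewrite /N.
  under eq_bigr do rewrite exprMn.
  under [in RHS]eq_bigr do rewrite exprMn.
  rewrite !big_split /= !prodE !mulrA DB //.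
  congr (_ * expR (lam * _)).
  apply/eqP; rewrite eq_sym -subr_eq0 -split_sum; exact/eqP/cr.
exists (fun v : Vsub T s => N (val v)); split; first by move=> v; apply: Npos.
move=> r' _.
rewrite /reduced_rates !mulr_suml.
have -> : \prod_(v | 0 < r' v) N (val v) ^+ `|r' v|%N
        = \prod_(v : Vsub T s | (- r') v < 0) N (val v) ^+ `|(- r') v|%N.
  by apply: eq_big => v; rewrite ffunE ?oppr_lt0 ?abszN.
have projVN : forall rb, projV s (- rb) = - projV s rb.
  by move=> rb; apply/ffunP => v; rewrite !ffunE.
rewrite (@reindexN R T Rs (fun rb => projV s rb == - r')) //.
under [in RHS]eq_bigl => rb do rewrite projVN eqr_opp.
rewrite big_seq_cond [RHS]big_seq_cond.
apply: eq_bigr => rb /andP[rin /eqP pr].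
rewrite -mulrA -pr lemA // -mulrA -projVN lemA // DBN //.
congr (_ * _); apply: eq_big => i; rewrite ffunE ?oppr_lt0 ?abszN //.
Qed.
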